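(* Let $(X,G)$ be a minimal topological dynamical system. Then: (1) If $\pi_{eq}$ is open, then $\mathcal X_{eq}^{\mathrm{meas}}=\{\pi_{eq}^{-1}(y):y\in X_{eq}\}$. (2) If $\pi_{eq}$ is regular one to one, then $|E|=1$ for every $E\in\mathcal X_{eq}^{\mathrm{meas}}$. (3) If $\pi_{eq}$ is regular $K$ to one, then $|E|\le K$ for every $E\in\mathcal X_{eq}^{\mathrm{meas}}$.
   Context: $G$ is an infinite countable discrete group; a tds $(X,G)$ is a compact metric space with a $G$-action by homeomorphisms; minimal means no proper nonempty closed invariant subset. $\pi_{eq}:X\to X_{eq}$ is the factor map onto the maximal equicontinuous factor, $\nu_{eq}$ the unique invariant probability measure of $(X_{eq},G)$; $\pi_{eq}$ is regular $K$ to one if $\nu_{eq}(\{y:|\pi_{eq}^{-1}(y)|=K\})=1$. $2^X$ is the space of nonempty closed subsets with the Hausdorff metric $d_H$. $\mathcal X=\overline{\{\pi_{eq}^{-1}(y):y\in X_{eq}\}}\subset 2^X$; for $E\in\mathcal X$, $\pi_{\mathcal X}(E)$ is the single point $\pi_{eq}(E)$. $\mathcal X_{eq}^{\mathrm{meas}}=\{E\in\mathcal X:\nu_{eq}(\pi_{\mathcal X}(B^{\mathcal X}_\epsilon(E)))>0\ \forall\epsilon>0\}$, $B^{\mathcal X}_\epsilon(E)$ the open $d_H$-ball in $\mathcal X$. *)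

(* Defs.v *)
From HB Require Import structures.
From mathcomp Require Import all_boot all_order all_algebra.
From mathcomp Require Import all_classical all_reals all_analysis.
Set Implicit Arguments.
Unset Strict Implicit.
Unset Printing Implicit Defensive.
Import Order.TTheory GRing.Theory Num.Theory.
Local Open Scope classical_set_scope.
Local Open Scope ring_scope.
Local Open Scope card_scope.

(* Pointed (i.e. nonempty, with a chosen point) metric spaces: needed only so
   that the Borel sigma-algebra <<s open >> yields a measurableType. *)
#[short(type="pmetricType")]
HB.structure Definition PMetric (K : numDomainType) :=
  { M of Metric K M & isPointed M }.

Definition borel (R : realType) (T : pmetricType R) :=
  g_sigma_algebraType (@open T).

Definition is_group (G : Type) (mul : G -> G -> G) (one : G) (inv : G -> G) :=
  [/\ forall a b c, mul a (mul b c) = mul (mul a b) c,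
      forall a, mul one a = a, forall a, mul a one = a,
      forall a, mul (inv a) a = one & forall a, mul a (inv a) = one].

Definition tds (R : realType) (G : Type) (mul : G -> G -> G) (one : G)
  (T : metricType R) (act : G -> T -> T) :=
  [/\ compact [set: T], forall g, continuous (act g),
      forall x, act one x = x &
      forall g h x, act (mul g h) x = act g (act h x)].

Definition minimal (R : realType) (G : Type) (T : metricType R)
  (act : G -> T -> T) :=
  forall A : set T, closed A -> A !=set0 ->
    (forall g, act g @` A `<=` A) -> A = [set: T].

Definition equicontinuous (R : realType) (G : Type) (T : metricType R)
  (act : G -> T -> T) :=
  forall eps : R, 0 < eps -> exists2 delta : R, 0 < delta &
    forall x y, mdist x y < delta -> forall g, mdist (act g x) (act g y) < eps.

Definition factor_map (R : realType) (G : Type) (T S : metricType R)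
  (actT : G -> T -> T) (actS : G -> S -> S) (p : T -> S) :=
  [/\ continuous p, forall s, exists t, p t = s &
      forall g t, p (actT g t) = actS g (p t)].

Definition max_eq_factor (R : realType) (G : Type) (mul : G -> G -> G)
  (one : G) (X Xeq : metricType R) (act : G -> X -> X)
  (acteq : G -> Xeq -> Xeq) (pieq : X -> Xeq) :=
  [/\ tds mul one acteq, equicontinuous acteq, factor_map act acteq pieq &
      forall (Y : metricType R) (actY : G -> Y -> Y) (psi : X -> Y),
        tds mul one actY -> equicontinuous actY -> factor_map act actY psi ->
        exists phi : Xeq -> Y,
          factor_map acteq actY phi /\ forall x, psi x = phi (pieq x)].

Definition pdist (R : realType) (T : metricType R) (x : T) (F : set T) : R :=
  inf [set mdist x y | y in F].
Definition hdist (R : realType) (T : metricType R) (E F : set T) : R :=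
  Num.max (sup [set pdist x F | x in E]) (sup [set pdist y E | y in F]).

Definition hyperspace (R : realType) (T : metricType R) (E : set T) :=
  closed E /\ E !=set0.

(* calX = closure in (2^X, d_H) of the fibres of pieq *)
Definition calX (R : realType) (X Y : metricType R) (p : X -> Y) (E : set X) :=
  hyperspace E /\
  forall eps : R, 0 < eps -> exists y : Y, hdist E (p @^-1` [set y]) < eps.

Definition calX_ball (R : realType) (X Y : metricType R) (p : X -> Y)
  (E : set X) (eps : R) : set (set X) :=
  [set F | calX p F /\ hdist E F < eps].

Definition pi_calX_img (R : realType) (X Y : metricType R) (p : X -> Y)
  (B : set (set X)) : set Y :=
  \bigcup_(F in B) (p @` F).

Definition calX_meas (R : realType) (X : metricType R) (Y : pmetricType R)
  (p : X -> Y) (nu : probability (borel Y) R) (E : set X) :=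
  calX p E /\
  forall eps : R, 0 < eps ->
    (0 < nu (pi_calX_img p (calX_ball p E eps) : set (borel Y)))%E.

Definition regular_to_one (R : realType) (X : metricType R) (Y : pmetricType R)
  (p : X -> Y) (nu : probability (borel Y) R) (K : nat) :=
  nu ([set y | p @^-1` [set y] #= `I_K] : set (borel Y)) = 1%E.

Definition invariant_measure (R : realType) (G : Type) (Y : pmetricType R)
  (actY : G -> Y -> Y) (nu : probability (borel Y) R) :=
  forall g (A : set (borel Y)), measurable A ->
    nu ((actY g @^-1` A) : set (borel Y)) = nu A.

(* Main.v *)
Require Import Defs.
From HB Require Import structures.
From mathcomp Require Import all_boot all_order all_algebra.
From mathcomp Require Import all_classical all_reals all_analysis.
From mathcomp Require Import lra.
Import Order.TTheory GRing.Theory Num.Theory.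
Local Open Scope classical_set_scope.
Local Open Scope ring_scope.
Local Open Scope card_scope.

Module Aux.
Import metricType_numDomainType.
Set Implicit Arguments.
Unset Strict Implicit.
Unset Printing Implicit Defensive.

Section PDist.
Context {R : realType} {X : metricType R}.
Implicit Types (x y z : X) (E F H : set X).

Lemma pdist_ge0 x F : 0 <= pdist x F.
Proof.
rewrite /pdist; have [[z Fz]|F0] := pselect (F !=set0).
  apply: lb_le_inf; first by exists (mdist x z), z.
  by move=> _ [w _ <-]; exact: mdist_ge0.
have -> : F = set0 by apply/seteqP; split => // w Fw; apply: F0; exists w.
by rewrite image_set0 inf0.
Qed.

Lemma pdist_le x F z : F z -> pdist x F <= mdist x z.
Proof.
move=> Fz; apply: ge_inf; last by exists z.
by exists 0 => _ [w _ <-]; exact: mdist_ge0.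
Qed.

Lemma pdist_lt x F c : F !=set0 -> pdist x F < c -> exists2 z, F z & mdist x z < c.
Proof.
move=> [z Fz] /inf_lt; case; first by exists (mdist x z), z.
by move=> _ [w Fw <-] h; exists w.
Qed.

Lemma pdist_ge x F c : F !=set0 -> (forall z, F z -> c <= mdist x z) -> c <= pdist x F.
Proof.
move=> [z Fz] h; apply: lb_le_inf; first by exists (mdist x z), z.
by move=> _ [w Fw <-]; exact: h.
Qed.

Lemma pdist_tri x x' F : F !=set0 -> pdist x F <= mdist x x' + pdist x' F.
Proof.
move=> F0; rewrite -lerBlDl; apply: pdist_ge => // z Fz.
rewrite lerBlDl (le_trans (pdist_le x Fz))//; exact: metric_triangle.
Qed.

End PDist.

Section HDist.
Context {R : realType} {X : metricType R}.
Implicit Types (x y z : X) (E F H : set X).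

Lemma hdistC E F : hdist E F = hdist F E.
Proof. by rewrite /hdist maxC. Qed.

Context (D : R) (hD : forall x y : X, mdist x y <= D).

Lemma pdist_leD x F : F !=set0 -> pdist x F <= D.
Proof. by move=> [z Fz]; rewrite (le_trans (pdist_le x Fz)). Qed.

Lemma hdist_pdistl E F x : F !=set0 -> E x -> pdist x F <= hdist E F.
Proof.
move=> F0 Ex; rewrite /hdist le_max; apply/orP; left.
apply: ub_le_sup; last by exists x.
by exists D => _ [w _ <-]; exact: pdist_leD.
Qed.

Lemma hdist_pdistr E F y : E !=set0 -> F y -> pdist y E <= hdist E F.
Proof. by rewrite hdistC; exact: hdist_pdistl. Qed.

Lemma hdist_le E F c : E !=set0 -> F !=set0 ->
  (forall x, E x -> pdist x F <= c) -> (forall y, F y -> pdist y E <= c) ->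
  hdist E F <= c.
Proof.
move=> [e Ee] [f Ff] h1 h2; rewrite /hdist ge_max; apply/andP; split.
  by apply: ge_sup; [exists (pdist e F), e|move=> _ [w Ew <-]; exact: h1].
by apply: ge_sup; [exists (pdist f E), f|move=> _ [w Fw <-]; exact: h2].
Qed.

Lemma hdist_le_ex E F c : E !=set0 -> F !=set0 ->
  (forall x, E x -> exists2 z, F z & mdist x z <= c) ->
  (forall y, F y -> exists2 z, E z & mdist y z <= c) ->
  hdist E F <= c.
Proof.
move=> E0 F0 h1 h2; apply: hdist_le => // x /[dup] Ex.
  by move=> /h1[z Fz] xz; rewrite (le_trans (pdist_le x Fz)).
by move=> /h2[z Fz] xz; rewrite (le_trans (pdist_le x Fz)).
Qed.

Lemma hdist_lt_exl E F c x : F !=set0 -> E x -> hdist E F < c ->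
  exists2 z, F z & mdist x z < c.
Proof.
move=> F0 Ex hc; apply: pdist_lt => //.
exact: le_lt_trans (hdist_pdistl F0 Ex) hc.
Qed.

Lemma hdist_lt_exr E F c y : E !=set0 -> F y -> hdist E F < c ->
  exists2 z, E z & mdist y z < c.
Proof. by move=> E0 Fy; rewrite hdistC; exact: hdist_lt_exl. Qed.

Lemma hdist_ge0 E F : E !=set0 -> F !=set0 -> 0 <= hdist E F.
Proof.
by move=> [e Ee] F0; exact: le_trans (pdist_ge0 e F) (hdist_pdistl F0 Ee).
Qed.

Lemma hdist_self E : E !=set0 -> hdist E E = 0.
Proof.
move=> E0; apply/eqP; rewrite eq_le hdist_ge0// andbT.
have h : forall x, E x -> pdist x E <= 0.
  by move=> x Ex; rewrite (le_trans (pdist_le x Ex))// mdistxx.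
exact: hdist_le.
Qed.

Lemma hdist_tri E F H : E !=set0 -> F !=set0 -> H !=set0 ->
  hdist E H <= hdist E F + hdist F H.
Proof.
move=> E0 F0 H0; apply: hdist_le => // x Hx.
- rewrite -lerBlDr; apply: le_trans (hdist_pdistl F0 Hx).
  apply: pdist_ge => // z Fz; rewrite lerBlDr.
  rewrite (le_trans (pdist_tri x z H0))// lerD2l.
  exact: hdist_pdistl.
- rewrite addrC -lerBlDr; apply: le_trans (hdist_pdistr F0 Hx).
  apply: pdist_ge => // z Fz; rewrite lerBlDr.
  rewrite (le_trans (pdist_tri x z E0))// lerD2l.
  exact: hdist_pdistr.
Qed.

End HDist.


Section Cpt.
Context {R : realType} {X : metricType R}.

Lemma mball_open (x : X) r : open [set y | mdist x y < r].
Proof.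
rewrite openE => y /= xy; rewrite /interior -filter_from_mdist_nbhs.
exists (r - mdist x y) => /=; first by rewrite subr_gt0.
move=> z /= yz; rewrite (le_lt_trans (metric_triangle _ y _))//.
by rewrite -ltrBrDl.
Qed.

Lemma finite_net : compact [set: X] -> forall r, 0 < r ->
  exists s : seq X, forall x, exists2 p, p \in s & mdist p x < r.
Proof.
move=> cpt r r0; apply: contrapT => hn.
pose B (s : seq X) := [set x | forall p, p \in s -> r <= mdist p x].
have FF : Filter (filter_from [set: seq X] B).
  apply: filter_from_filter; first by exists [::].
  move=> s1 s2 _ _; exists (s1 ++ s2) => // x Bx; split => p ps; apply: Bx;
    by rewrite mem_cat ps ?orbT.
have PF : ProperFilter (filter_from [set: seq X] B).
  apply: filter_from_proper => s _; apply: contrapT => hs; apply: hn.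
  exists s => x; apply: contrapT => hx; apply: hs; exists x => p ps.
  by rewrite leNgt; apply/negP => px; apply: hx; exists p.
have [c [_ cc]] := cpt _ PF (filterT).
have := cc (B [:: c]) [set y | mdist c y < r] _ _.
case.
- by exists [:: c].
- by rewrite -filter_from_mdist_nbhs; exists r.
move=> y [/(_ c (mem_head _ _))]; rewrite leNgt => /negP; apply.
Qed.


Lemma le_sum_seq (s : seq X) (F : X -> R) (p : X) : p \in s ->
  (forall q, 0 <= F q) -> F p <= \sum_(q <- s) F q.
Proof.
move=> ps F0; rewrite (big_rem p ps)/= lerDl.
by apply: sumr_ge0 => i _.
Qed.

Lemma compact_bounded_metric : compact [set: X] ->
  exists D : R, forall x y : X, mdist x y <= D.
Proof.
move=> cpt; have [s hs] := finite_net cpt (@ltr01 R).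
exists (2 + \sum_(p <- s) \sum_(q <- s) mdist p q) => x y.
have [p ps px] := hs x; have [q qs qy] := hs y.
have h1 : mdist x y <= mdist x p + mdist p q + mdist q y.
  rewrite (le_trans (metric_triangle _ p _))// -addrA lerD2l.
  exact: metric_triangle.
have h2a : mdist p q <= \sum_(q0 <- s) mdist p q0.
  rewrite (big_rem q qs)/= lerDl; apply: sumr_ge0 => ? _; exact: mdist_ge0.
have h2 : \sum_(q0 <- s) mdist p q0 <= \sum_(p <- s) \sum_(q <- s) mdist p q.
  rewrite [X in _ <= X](big_rem p ps)/= lerDl; apply: sumr_ge0 => ? _.
  by apply: sumr_ge0 => ? _; exact: mdist_ge0.
rewrite metric_sym in px; lra.
Qed.

End Cpt.


Lemma ultra_not T (U : set_system T) (A : set T) : UltraFilter U ->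
  ~ U A -> U (~` A).
Proof. by move=> UU nA; case: (in_ultra_setVsetC A UU). Qed.

Lemma filter_all_seq T (U : set_system T) (FU : Filter U) (I : eqType)
  (s : seq I) (Q : I -> set T) :
  (forall p, p \in s -> U (Q p)) -> U [set i | forall p, p \in s -> Q p i].
Proof.
elim: s => [|a s IH] h.
  by apply: filterS filterT => i _ p.
have h1 := h a (mem_head a s).
have h2 := IH (fun p ps => h p (ltac:(by rewrite in_cons ps orbT))).
apply: filterS (filterI h1 h2) => i [Qa Hs] p.
by rewrite in_cons => /orP[/eqP->|]; [|exact: Hs].
Qed.

Section Ultra.
Context {R : realType} {X : metricType R} (cpt : compact [set: X]).

Lemma ultra_lim (I : Type) (U : set_system I) (UU : UltraFilter U)
  (x : I -> X) : exists p, forall rho, 0 < rho -> U [set i | mdist p (x i) < rho].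
Proof.
have [c [_ cc]] := @cpt (x @ U) _ filterT.
exists c => rho rho0; apply: contrapT => nU.
have := ultra_not UU nU => nU'.
have := cc (~` [set y | mdist c y < rho]) [set y | mdist c y < rho] nU' _.
case; first by rewrite -filter_from_mdist_nbhs; exists rho.
by move=> y [].
Qed.


Lemma hlim (I : Type) (U : set_system I) (UU : UltraFilter U)
  (Phi : I -> set X) (Phi0 : forall i, Phi i !=set0) :
  exists F : set X, [/\ closed F, F !=set0 &
    forall rho, 0 < rho -> U [set i | hdist F (Phi i) <= rho]].
Proof.
have [D hD] := compact_bounded_metric cpt.
pose F := [set x : X | forall rho, 0 < rho ->
  U [set i | exists2 z, Phi i z & mdist x z < rho]].
have ii : forall rho, 0 < rho ->
    U [set i | forall z, Phi i z -> exists2 x, F x & mdist z x < rho].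
  move=> rho rho0; apply: contrapT => nU.
  have := ultra_not UU nU => nU'.
  pose P (i : I) (z : X) := forall x, F x -> rho <= mdist z x.
  have hz : forall i, exists y,
      Phi i y /\ ((exists2 z, Phi i z & P i z) -> P i y).
    move=> i.
    have [[z Pz Qz]|nz] := pselect (exists2 z, Phi i z & P i z).
      by exists z.
    by have [z Pz] := Phi0 i; exists z; split.
  have [zf hzf] := choice hz.
  have [c hc] := ultra_lim UU zf.
  have Fc : F c.
    move=> r r0; apply: filterS (hc r r0) => i ci.
    by exists (zf i) => //; case: (hzf i).
  have [i [nUi ci]] := filter_ex (filterI nU' (hc rho rho0)).
  apply: nUi => z Pz; apply: contrapT => hnz.
  have Piz : P i z.
    move=> x Fx; rewrite leNgt; apply/negP => zx; apply: hnz; by exists x.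
  have := (hzf i).2 (ex_intro2 _ _ z Pz Piz) c Fc.
  by rewrite metric_sym leNgt ci.
have F0 : F !=set0.
  have [i hi] := filter_ex (ii 1 ltr01).
  have [z Pz] := Phi0 i; have [x Fx _] := hi z Pz; by exists x.
have iii : forall rho, 0 < rho ->
    U [set i | forall x, F x -> exists2 z, Phi i z & mdist x z < rho].
  move=> rho rho0; have r3 : 0 < rho / 3 by rewrite divr_gt0.
  have [s hs] := finite_net cpt r3.
  have hx : forall p, exists y,
      (exists2 x, F x & mdist p x < rho / 3) -> F y /\ mdist p y < rho / 3.
    move=> p.
    have [[x Fx px]|nx] := pselect (exists2 x, F x & mdist p x < rho / 3).
      by exists x.
    by exists p.
  have [xp hxp] := choice hx.
  have hall : U [set i | forall p, p \in s ->
    (exists2 x, F x & mdist p x < rho / 3) ->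
    exists2 z, Phi i z & mdist (xp p) z < rho / 3].
    apply: filter_all_seq => p _.
    have [hp|nhp] := pselect (exists2 x, F x & mdist p x < rho / 3).
      have [Fxp _] := hxp p hp.
      by apply: filterS (Fxp _ r3) => i hi _.
    by apply: filterS filterT => i _ hp.
  apply: filterS hall => i hi x Fx.
  have [p ps px] := hs x.
  have [Fxp pxp] := hxp p (ex_intro2 _ _ x Fx px).
  have [z Pz xz] := hi p ps (ex_intro2 _ _ x Fx px).
  exists z => //.
  have h1 : mdist x z <= mdist x p + mdist p (xp p) + mdist (xp p) z.
    rewrite (le_trans (metric_triangle _ p _))// -addrA lerD2l.
    exact: metric_triangle.
  rewrite metric_sym in px; lra.
exists F; split => //.
  move=> x clx r r0.
  have r2 : 0 < r / 2 by rewrite divr_gt0.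
  have [x' [Fx' xx']] : F `&` [set y | mdist x y < r / 2] !=set0.
    by apply: clx; rewrite -filter_from_mdist_nbhs; exists (r / 2).
  apply: filterS (Fx' _ r2) => i [z Pz x'z]; exists z => //.
  rewrite (le_lt_trans (metric_triangle _ x' _))//.
  rewrite /= in xx'; lra.
move=> rho rho0.
apply: filterS (filterI (ii rho rho0) (iii rho rho0)) => i [h2 h3].
apply: hdist_le_ex; [exact: F0|exact: Phi0| |].
  by move=> x Fx; have [z Pz xz] := h3 x Fx; exists z => //; rewrite ltW.
by move=> z Pz; have [x Fx zx] := h2 z Pz; exists x => //; rewrite ltW.
Qed.

End Ultra.


Lemma archi_inv (R : realType) (e : R) : 0 < e -> exists n : nat, (n.+1%:R)^-1 < e.
Proof.
move=> e0; have ie : 0 <= e^-1 by rewrite invr_ge0 ltW.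
have := archi_boundP ie.
set n := Num.bound _ => hn; exists n.
rewrite -(invrK e) ltf_pV2 ?posrE ?invr_gt0 ?ltr0Sn//.
by rewrite (lt_le_trans hn)// ler_nat.
Qed.

Section Fiber.
Context {R : realType} {X Y : metricType R}.
Variables (pieq : X -> Y) (pcont : continuous pieq).
Variable (psurj : forall y, exists x, pieq x = y).

Lemma fib0 y : pieq @^-1` [set y] !=set0.
Proof. by have [x hx] := psurj y; exists x. Qed.
Variables (D : R) (hD : forall x y : X, mdist x y <= D).

Lemma cont_eps z e : 0 < e -> exists2 d, 0 < d &
  forall z', mdist z z' < d -> mdist (pieq z) (pieq z') < e.
Proof.
move=> e0; have := @pcont z; move/cvgrPdist_lt/(_ e e0).
by rewrite -filter_from_mdist_nbhs => -[d d0 hd]; exists d.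
Qed.

Lemma fiber_lim z y : (forall rho, 0 < rho ->
  exists z', mdist z z' < rho /\ mdist y (pieq z') < rho) -> pieq z = y.
Proof.
move=> h; apply: mdist_positivity; apply/eqP; rewrite eq_le mdist_ge0 andbT.
apply/ler_addgt0Pl => e e0; rewrite addr0.
have e2 : 0 < e / 2 by rewrite divr_gt0.
have [d d0 hd] := cont_eps z e2.
have md : 0 < Num.min d (e / 2) by rewrite lt_min d0 e2.
have [z' [zz' yz']] := h _ md.
rewrite lt_min in zz'; case/andP: zz' => zz' _.
rewrite lt_min in yz'; case/andP: yz' => _ yz'.
have h1 := hd _ zz'.
have h2 := metric_triangle (pieq z) (pieq z') y.
rewrite metric_sym in yz'; lra.
Qed.

Lemma calX_fiber F z w : calX pieq F -> F z -> F w -> pieq w = pieq z.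
Proof.
move=> [[_ F0] hF] Fz Fw; apply: fiber_lim => rho rho0.
have [d d0 hd] := cont_eps z rho0.
have md : 0 < Num.min d rho by rewrite lt_min d0 rho0.
have [y hy] := hF _ md.
have P0 := fib0 y.
have [z' Pz' zz'] := hdist_lt_exl hD P0 Fz hy.
have [w' Pw' ww'] := hdist_lt_exl hD P0 Fw hy.
rewrite lt_min in zz'; case/andP: zz' => zz' _.
rewrite lt_min in ww'; case/andP: ww' => _ ww'.
exists w'; split => //; rewrite Pw'; rewrite /= in Pz'.
by rewrite -Pz'; exact: hd.
Qed.

End Fiber.


Section Meas.
Context {R : realType} {X : metricType R} {Y : pmetricType R}.
Variables (pieq : X -> Y) (pcont : continuous pieq).
Variable (psurj : forall y, exists x, pieq x = y).
Variable (cptX : compact [set: X]).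
Variables (D : R) (hD : forall x y : X, mdist x y <= D).

Lemma closed_meas (C : set Y) : closed C -> measurable (C : set (borel Y)).
Proof.
move=> cC; have -> : C = ~` (~` C) by rewrite setCK.
apply: measurableC; apply: sub_sigma_algebra; exact: closed_openC.
Qed.

Lemma A_meas E eps : E !=set0 ->
  measurable (pi_calX_img pieq (calX_ball pieq E eps) : set (borel Y)).
Proof.
move=> E0.
pose T n := [set y' : Y | hdist E (pieq @^-1` [set y']) < eps - (n.+1%:R)^-1].
suff -> : pi_calX_img pieq (calX_ball pieq E eps) = \bigcup_n closure (T n).
  by apply: bigcupT_measurable => n; apply: closed_meas; exact: closed_closure.
apply/seteqP; split.
- move=> y [F [cF hEF] [z Fz <-]].
  have F0 : F !=set0 by exists z.
  set h := hdist E F in hEF.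
  have g2 : 0 < (eps - h) / 2 by rewrite divr_gt0// subr_gt0.
  have [n hn] := archi_inv g2.
  exists n => // B; rewrite -filter_from_mdist_nbhs => -[r r0 hr].
  have [d d0 hd] := cont_eps pcont z r0.
  have md : 0 < Num.min d ((eps - h) / 2) by rewrite lt_min d0 g2.
  have [y'' hy''] := cF.2 _ md.
  have [z'' Pz'' zz''] := hdist_lt_exl hD (fib0 psurj y'') Fz hy''.
  rewrite lt_min in zz''; case/andP: zz'' => zz'' _.
  rewrite lt_min in hy''; case/andP: hy'' => _ hy''.
  exists y''; split; last first.
    by apply: hr; rewrite /= -Pz''; exact: hd.
  rewrite /T /=.
  have := hdist_tri hD E0 F0 (fib0 psurj y''); rewrite -/h => ht.
  clearbody h; set k := (n.+1%:R^-1 : R).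
  have hn2 : k < (eps - h) / 2 := hn.
  change (hdist E (pieq @^-1` [set y'']) < eps - k); lra.
- move=> y [n _ cly].
  have PF : ProperFilter (within (T n) (nbhs y)).
    by apply: within_nbhs_proper.
  have [U [UU sub]] := ultraFilterLemma PF.
  have UT : U (T n) by apply: sub; exact: withinT.
  have Ub : forall r, 0 < r -> U [set i | mdist y i < r].
    move=> r r0; apply: sub; rewrite /within.
    rewrite -filter_from_mdist_nbhs; exists r => // x xr _; exact: xr.
  have [F [clF F0 hF]] := @hlim _ _ cptX _ U UU (fun i => pieq @^-1` [set i]) (fib0 psurj).
  have [z Fz] := F0.
  exists F; last first.
    exists z => //; apply: (fiber_lim pcont) => rho rho0.
    have r2 : 0 < rho / 2 by rewrite divr_gt0.
    have [i [hi yi]] := filter_ex (filterI (hF _ r2) (Ub _ rho0)).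
    have hi' : hdist F (pieq @^-1` [set i]) < rho by rewrite /= in hi; lra.
    have [z' Pz' zz'] := hdist_lt_exl hD (fib0 psurj i) Fz hi'.
    by exists z'; rewrite Pz'.
  split.
    split; first by split.
    move=> e e0; have e2 : 0 < e / 2 by rewrite divr_gt0.
    have [i hi] := filter_ex (hF _ e2); exists i; rewrite /= in hi; lra.
  set k := (n.+1%:R^-1 : R).
  have k0 : 0 < k by rewrite invr_gt0 ltr0Sn.
  have ni : 0 < k / 2 by rewrite divr_gt0.
  have [i [hi Ti]] := filter_ex (filterI (hF _ ni) UT).
  have Ti' : hdist E (pieq @^-1` [set i]) < eps - k := Ti.
  have := hdist_tri hD E0 (fib0 psurj i) F0.
  rewrite (hdistC (pieq @^-1` [set i])).
  rewrite /= in hi; clearbody k; lra.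
Qed.

End Meas.


Lemma card_le_fun T U (A : set T) (B : set U) (f : T -> U) :
  set_fun A B f -> set_inj A f -> A #<= B.
Proof.
move=> hf hi; have [g] : $|{injfun A >-> B}| by apply/injfunPex; exists f.
exact: inj_card_le.
Qed.

Lemma card_le_ext (T : choiceType) (B : set T) (d : T) m : `I_m #<= B ->
  exists x : nat -> T, (forall i, (i < m)%N -> B (x i)) /\ set_inj `I_m x.
Proof.
rewrite -card_le_some => /pcard_leP /injfunPex [f hf hi].
exists (fun i => odflt d (f i)); split.
  move=> i im; have [b Bb fb] := hf i im.
  by rewrite -fb.
move=> i j iI jI /= eq; apply: hi => //.
have [b Bb fb] := hf i (set_mem iI); have [c Bc fc] := hf j (set_mem jI).
by rewrite -fb -fc; rewrite -fb -fc /= in eq; rewrite eq.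
Qed.

Lemma card_eq_iff T (B : set T) K :
  B #= `I_K <-> (`I_K #<= B /\ ~ (`I_K.+1 #<= B)).
Proof.
split.
  move=> /card_eqPle[BK KB]; split => // h.
  by have := card_le_trans h BK; rewrite card_le_II ltnn.
move=> [KB nK]; apply/card_eqPle; split => //.
have [fB|iB] := pselect (finite_set B); last first.
  exfalso; apply: nK; move/infiniteP: iB => iB.
  exact: card_le_trans (subset_card_le (subsetT _)) iB.
have [n /card_eqPle[Bn nB]] := fB.
have [nK'|Kn] := leqP n K.
  by apply: card_le_trans Bn _; rewrite card_le_II.
by exfalso; apply: nK; apply: card_le_trans nB; rewrite card_le_II.
Qed.

Lemma card_not_le T (B : set T) K : ~ (B #<= `I_K) -> `I_K.+1 #<= B.
Proof.
move=> nBK; have [fB|iB] := pselect (finite_set B); last first.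
  move/infiniteP: iB => iB.
  exact: card_le_trans (subset_card_le (subsetT _)) iB.
have [n /card_eqPle[Bn nB]] := fB.
have [nK'|Kn] := leqP n K.
  by exfalso; apply: nBK; apply: card_le_trans Bn _; rewrite card_le_II.
by apply: card_le_trans nB; rewrite card_le_II.
Qed.

Lemma card_one T (B : set T) : B !=set0 -> B #<= `I_1 -> B #= `I_1.
Proof.
move=> [b Bb] h; apply/card_eqPle; split => //.
apply: (@card_le_fun _ _ _ _ (fun=> b)) => // i j.
by rewrite !in_setE /= => hi hj _; case: i hi; case: j hj.
Qed.

Lemma fin_pos (R : realType) (m : nat) (h : nat -> R) :
  (forall i, (i < m)%N -> 0 < h i) ->
  exists2 e, 0 < e & forall i, (i < m)%N -> e <= h i.
Proof.
elim: m => [|m IH] hp; first by exists 1.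
have [e e0 he] := IH (fun i im => hp i (ltn_trans im (ltnSn m))).
exists (Num.min e (h m)); first by rewrite lt_min e0 hp.
move=> i; rewrite ltnS leq_eqVlt => /orP[/eqP->|im].
  by rewrite ge_min lexx orbT.
by rewrite ge_min he.
Qed.

Lemma fin_pos2 (R : realType) (m : nat) (g : nat -> nat -> R) :
  (forall i j, (i < m)%N -> (j < m)%N -> i <> j -> 0 < g i j) ->
  exists n : nat, forall i j, (i < m)%N -> (j < m)%N -> i <> j ->
    (n.+1%:R)^-1 <= g i j.
Proof.
move=> hp.
have h1 : forall i, exists e : R, (i < m)%N -> 0 < e /\
    forall j, (j < m)%N -> i <> j -> e <= g i j.
  move=> i; have [im|im] := ltnP i m; last by exists 1.
  have hpos : forall j, (j < m)%N -> 0 < (if i == j then 1 else g i j).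
    move=> j jm; have [ij|ij] := eqVneq i j; first exact: ltr01.
    by apply: hp => //; exact/eqP.
  have [e e0 he] := @fin_pos R m (fun j => if i == j then 1 else g i j) hpos.
  exists e => _; split => // j jm ij.
  have ij' : (i == j) = false by apply/eqP.
  by have := he j jm; rewrite ij'.
have [ef hef] := choice h1.
have [e e0 he] := @fin_pos R m ef (fun i im => ((hef i) im).1).
have [n hn] := archi_inv e0.
exists n => i j im jm ij.
apply: (le_trans (ltW hn)); apply: (le_trans (he i im)).
exact: ((hef i) im).2.
Qed.

Section Count.
Context {R : realType} {X : metricType R} {Y : pmetricType R}.
Variables (pieq : X -> Y) (pcont : continuous pieq).
Variable (psurj : forall y, exists x, pieq x = y).
Variable (cptX : compact [set: X]).

Definition Tn (n m : nat) := [set y : Y | exists x : nat -> X,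
  (forall i, (i < m)%N -> pieq (x i) = y) /\
  (forall i j, (i < m)%N -> (j < m)%N -> i <> j ->
     (n.+1%:R)^-1 <= mdist (x i) (x j))].

Lemma Tn_closed n m : closed (Tn n m).
Proof.
move=> y cly.
have PF : ProperFilter (within (Tn n m) (nbhs y)).
  by apply: within_nbhs_proper.
have [U [UU sub]] := ultraFilterLemma PF.
have UT : U (Tn n m) by apply: sub; exact: withinT.
have Ub : forall r, 0 < r -> U [set i | mdist y i < r].
  move=> r r0; apply: sub; rewrite /within.
  rewrite -filter_from_mdist_nbhs; exists r => // x xr _; exact: xr.
have h1 : forall y', exists x : nat -> X, Tn n m y' ->
    (forall i, (i < m)%N -> pieq (x i) = y') /\
    (forall i j, (i < m)%N -> (j < m)%N -> i <> j ->
       (n.+1%:R)^-1 <= mdist (x i) (x j)).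
  move=> y'; have [[x hx]|nx] := pselect (Tn n m y'); first by exists x.
  have [z _] := psurj y'; by exists (fun=> z).
have [xf hxf] := choice h1.
have h2 : forall i, exists p : X, forall rho, 0 < rho ->
    U [set y' | mdist p (xf y' i) < rho].
  move=> i; exact: (ultra_lim cptX UU (fun y' => xf y' i)).
have [pf hpf] := choice h2.
exists pf; split.
  move=> i im; apply: (fiber_lim pcont) => rho rho0.
  have [y' [[h3 h4] T']] := filter_ex (filterI (filterI (hpf i _ rho0) (Ub _ rho0)) UT).
  exists (xf y' i); split => //.
  by rewrite ((hxf y' T').1 i im).
move=> i j im jm ij; rewrite leNgt; apply/negP => hlt0.
pose c : R := (n.+1%:R)^-1.
have hlt : mdist (pf i) (pf j) < c := hlt0.
have g0 : 0 < (c - mdist (pf i) (pf j)) / 2 by rewrite divr_gt0// subr_gt0.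
have [y' [[h3 h4] T']] := filter_ex (filterI (filterI (hpf i _ g0) (hpf j _ g0)) UT).
have [_ h5] := hxf y' T'.
have h6 : c <= mdist (xf y' i) (xf y' j) := h5 i j im jm ij.
rewrite /= in h3 h4.
have t1 := metric_triangle (xf y' i) (pf i) (xf y' j).
have t2 := metric_triangle (pf i) (pf j) (xf y' j).
rewrite metric_sym in h3.
clearbody c; clear hlt0 h5 im jm ij; lra.
Qed.

Lemma M_eq m : [set y : Y | `I_m #<= pieq @^-1` [set y]] = \bigcup_n Tn n m.
Proof.
apply/seteqP; split.
  move=> y /=; have [z _] := psurj y.
  move=> /(card_le_ext z) [x [hx hinj]].
  have pos : forall i j, (i < m)%N -> (j < m)%N -> i <> j ->
      0 < mdist (x i) (x j).
    move=> i j im jm ij; rewrite mdist_gt0; apply/eqP => eq; apply: ij.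
    by apply: hinj => //; rewrite in_setE.
  have [n hn] := fin_pos2 pos.
  by exists n => //; exists x; split => // i im; exact: hx.
move=> y [n _ [x [hx hd]]] /=.
apply: (@card_le_fun _ _ _ _ x).
  by move=> i im; exact: hx.
move=> i j; rewrite !in_setE /= => im jm eq.
apply: contrapT => ij; have := hd i j im jm ij; rewrite eq mdistxx.
by rewrite leNgt invr_gt0 ltr0Sn.
Qed.

Lemma M_meas m : measurable ([set y : Y | `I_m #<= pieq @^-1` [set y]] : set (borel Y)).
Proof.
rewrite M_eq; apply: bigcupT_measurable => n.
apply: closed_meas; exact: Tn_closed.
Qed.

Lemma S_meas K : measurable ([set y : Y | pieq @^-1` [set y] #= `I_K] : set (borel Y)).
Proof.
have -> : [set y : Y | pieq @^-1` [set y] #= `I_K] =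
    [set y : Y | `I_K #<= pieq @^-1` [set y]] `&`
    ~` [set y : Y | `I_K.+1 #<= pieq @^-1` [set y]].
  by apply/seteqP; split => y /=; rewrite card_eq_iff.
apply: measurableI; first exact: M_meas.
apply: measurableC; exact: M_meas.
Qed.

End Count.


Section Dyn.
Context {R : realType} {G : countType} (mul : G -> G -> G) (one : G).
Context {X : metricType R} {Y : pmetricType R}.
Variables (act : G -> X -> X) (acteq : G -> Y -> Y) (pieq : X -> Y).
Hypothesis Hfac : factor_map act acteq pieq.
Hypothesis Hmin : minimal act.
Hypothesis HtdsY : tds mul one acteq.
Variable nueq : probability (borel Y) R.
Hypothesis Hinv : invariant_measure acteq nueq.

Lemma open_meas (U : set Y) : open U -> measurable (U : set (borel Y)).
Proof. by move=> oU; apply: sub_sigma_algebra. Qed.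

Lemma minY : minimal acteq.
Proof.
case: Hfac => pc ps pe.
move=> A cA [a Aa] inv.
have B : pieq @^-1` A = setT.
  apply: Hmin.
  - by apply: preimage_closed => // x _; exact: pc.
  - by have [x hx] := ps a; exists x; rewrite /= hx.
  - move=> g _ [x Ax <-]; rewrite /= pe; apply: (inv g); by exists (pieq x).
apply/seteqP; split => // y _; have [x <-] := ps y.
by have : (pieq @^-1` A) x by rewrite B.
Qed.

Lemma full_support (U : set Y) : open U -> U !=set0 -> (0 < nueq U)%E.
Proof.
move=> oU [u Uu]; rewrite lt_neqAle measure_ge0 andbT; apply/negP => /eqP U0.
case: HtdsY => _ acont aone amul.
pose W := \bigcup_(g in [set: G]) (acteq g @^-1` U).
have oW : open W.
  apply: bigcup_open => g _; apply: open_comp => // y _; exact: acont.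
have WT : W = setT.
  apply: contrapT => WnT.
  have Wc : ~` W = setT.
    apply: minY.
    - by rewrite closedC.
    - apply: contrapT => h; apply: WnT; apply/seteqP; split => // y _.
      by apply: contrapT => ny; apply: h; exists y.
    - move=> h _ [y nWy <-] [g _ /= Ug]; apply: nWy; exists (mul g h) => //.
      by rewrite /= amul.
  have : (~` W) u by rewrite Wc.
  by apply; exists one => //; rewrite /= aone.
pose Fn (n : nat) : set (borel Y) :=
  if (unpickle n : option G) is Some g then acteq g @^-1` U else set0.
have mF : forall n, measurable (Fn n).
  move=> n; rewrite /Fn; case: (unpickle n) => [g|]; last exact: measurable0.
  apply: open_meas; apply: open_comp => // y _; exact: acont.
have hsub := @measure_sigma_subadditive _ _ _ nueq setT Fn mF measurableT.
have : (nueq setT <= \sum_(n <oo) nueq (Fn n))%E.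
  apply: hsub => y _; have : W y by rewrite WT.
  by case=> g _ Ug; exists (pickle g) => //; rewrite /Fn pickleK.
rewrite probability_setT eseries0; first by rewrite lee_fin ler10.
move=> n _ _; rewrite /Fn; case: (unpickle n) => [g|]; last exact: measure0.
by rewrite Hinv //; exact: open_meas.
Qed.

End Dyn.


Section Part3.
Context {R : realType} {X : metricType R} {Y : pmetricType R}.
Variables (pieq : X -> Y) (pcont : continuous pieq).
Variable (psurj : forall y, exists x, pieq x = y).
Variable (cptX : compact [set: X]).
Variables (D : R) (hD : forall x y : X, mdist x y <= D).
Variable nueq : probability (borel Y) R.

Lemma part3 K : regular_to_one pieq nueq K ->
  forall E, calX_meas pieq nueq E -> E #<= `I_K.
Proof.
move=> hreg E [cE hmeas]; apply: contrapT => nEK.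
have [[clE E0] _] := cE.
have [e0 Ee0] := E0.
have [x [hx hinj]] := card_le_ext e0 (card_not_le nEK).
have pos : forall i j, (i < K.+1)%N -> (j < K.+1)%N -> i <> j ->
    0 < mdist (x i) (x j).
  move=> i j im jm ij; rewrite mdist_gt0; apply/eqP => eq; apply: ij.
  by apply: hinj => //; rewrite in_setE.
have [n hn] := fin_pos2 pos.
pose c : R := (n.+1%:R)^-1.
have c0 : 0 < c by rewrite invr_gt0 ltr0Sn.
have d0 : 0 < c / 3 by rewrite divr_gt0.
have hA := hmeas _ d0.
set A := pi_calX_img pieq (calX_ball pieq E (c / 3)) in hA.
set S := [set y : Y | pieq @^-1` [set y] #= `I_K].
have mA : measurable (A : set (borel Y)) := A_meas pcont psurj cptX hD _ E0.
have mS : measurable (S : set (borel Y)) := S_meas pcont psurj cptX K.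
have [y [Ay Sy]] : A `&` S !=set0.
  apply: contrapT => nAS.
  have sub : A `<=` ~` S by move=> y Ay Sy; apply: nAS; exists y.
  have h : (nueq A <= nueq (~` S))%E.
    exact: (@le_measure _ _ _ nueq A (~` S) (mem_set mA) (mem_set (measurableC mS)) sub).
  have hc : nueq (~` S) = (1 - nueq S)%E := probability_setC nueq mS.
  have hS : nueq S = 1%E := hreg.
  rewrite hc hS subee // in h.
  by have := lt_le_trans hA h; rewrite ltxx.
case: Ay => F [cF hEF] [z Fz pz].
have F0 : F !=set0 by exists z.
have h1 : forall i, exists w, (i < K.+1)%N -> F w /\ mdist (x i) w < c / 3.
  move=> i; have [iK|iK] := ltnP i K.+1; last by exists z.
  have [w Fw hw] := hdist_lt_exl hD F0 (hx i iK) hEF.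
  by exists w.
have [wf hwf] := choice h1.
have : `I_K.+1 #<= pieq @^-1` [set y].
  apply: (@card_le_fun _ _ _ _ wf).
    move=> i iK; rewrite /= -pz.
    exact: (calX_fiber pcont psurj hD cF Fz ((hwf i iK).1)).
  move=> i j; rewrite !in_setE /= => im jm eq.
  apply: contrapT => ij; have := hn i j im jm ij; rewrite -/c => h2.
  have [_ h3] := hwf i im; have [_ h4] := hwf j jm.
  rewrite eq in h3.
  have t := metric_triangle (x i) (wf j) (x j).
  rewrite (metric_sym (wf j)) in t.
  clear im jm ij eq; lra.
move=> h; have [SK _] := (card_eqPle _ _).1 Sy.
by have := card_le_trans h SK; rewrite card_le_II ltnn.
Qed.

Lemma part2 : regular_to_one pieq nueq 1 ->
  forall E, calX_meas pieq nueq E -> E #= `I_1.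
Proof.
move=> hreg E hE; apply: card_one; first by case: hE => [[[_ E0] _] _].
exact: part3 hreg E hE.
Qed.

End Part3.


Section Part1.
Context {R : realType} {X : metricType R} {Y : pmetricType R}.
Variables (pieq : X -> Y) (pcont : continuous pieq).
Variable (psurj : forall y, exists x, pieq x = y).
Variable (cptX : compact [set: X]).
Variables (D : R) (hD : forall x y : X, mdist x y <= D).
Hypothesis hopen : forall U : set X, open U -> open (pieq @` U).

Lemma open_nbhs_at (T : topologicalType) (A : set T) (t : T) : open A -> A t -> nbhs t A.
Proof. by rewrite openE => oA At; exact: oA. Qed.

Lemma nbhs_ball_ex (T : metricType R) (y : T) (A : set T) : nbhs y A ->
  exists2 r, 0 < r & forall y', mdist y y' < r -> A y'.
Proof. by rewrite -filter_from_mdist_nbhs => -[r r0 hr]; exists r => // y' h; exact: hr. Qed.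

Lemma fib_cont y eps : 0 < eps -> exists2 s, 0 < s & forall y',
  mdist y y' < s -> hdist (pieq @^-1` [set y]) (pieq @^-1` [set y']) < eps.
Proof.
move=> e0; have e2 : 0 < eps / 2 by rewrite divr_gt0.
have e8 : 0 < eps / 8 by rewrite divr_gt0.
pose K := ~` (\bigcup_(x in pieq @^-1` [set y]) [set x' | mdist x x' < eps / 2]).
have clK : closed K.
  rewrite closedC; apply: bigcup_open => x _; exact: mball_open.
have cK : compact K := subclosed_compact clK cptX (@subsetT _ K).
have cpK : compact (pieq @` K) := continuous_compact (continuous_subspaceT pcont) cK.
have clpK : closed (pieq @` K) := compact_closed (@metric_hausdorff _ Y) cpK.
have na : nbhs y (~` (pieq @` K)).
  apply: open_nbhs_at; first exact: closed_openC.
  move=> [k Kk pk]; apply: Kk; exists k => //; by rewrite /= mdistxx.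
have [s hs] := finite_net cptX e8.
have hx : forall p, exists w,
    (exists2 x, pieq x = y & mdist p x < eps / 8) -> pieq w = y /\ mdist p w < eps / 8.
  move=> p; have [[x px hpx]|nx] := pselect (exists2 x, pieq x = y & mdist p x < eps / 8).
    by exists x.
  by exists p.
have [xp hxp] := choice hx.
have nb : nbhs y [set y' | forall p, p \in s ->
    (exists2 x, pieq x = y & mdist p x < eps / 8) ->
    exists w, mdist (xp p) w < eps / 8 /\ pieq w = y'].
  apply: filter_all_seq => p _.
  have [hp|nhp] := pselect (exists2 x, pieq x = y & mdist p x < eps / 8); last first.
    by apply: filterS filterT => y' _ hp.
  have [pxp _] := hxp p hp.
  have : nbhs y (pieq @` [set w | mdist (xp p) w < eps / 8]).
    apply: open_nbhs_at; first by apply: hopen; exact: mball_open.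
    by exists (xp p) => //; rewrite /= mdistxx.
  by apply: filterS => y' [w hw <-] _; exists w.
have [r r0 hr] := nbhs_ball_ex (filterI na nb).
exists r => // y' yy'; have [ha hb] := hr y' yy'.
have P0 := fib0 psurj y; have P0' := fib0 psurj y'.
apply: (@le_lt_trans _ _ (eps / 2)); last by lra.
apply: hdist_le_ex => //.
  move=> x px; have [p ps hpx] := hs x.
  have hp : exists2 x, pieq x = y & mdist p x < eps / 8 by exists x.
  have [w [hw pw]] := hb p ps hp.
  have [_ h2] := hxp p hp.
  exists w => //.
  have t1 := metric_triangle x p (xp p).
  have t2 := metric_triangle x (xp p) w.
  rewrite (metric_sym x p) in t1; lra.
move=> x' px'.
have : ~ K x' by move=> Kx; apply: ha; exists x'.
move=> /contrapT [x px hxx]; exists x => //.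
by rewrite metric_sym ltW.
Qed.

End Part1.

Section Part1b.
Context {R : realType} {X : metricType R} {Y : pmetricType R}.
Variables (pieq : X -> Y) (pcont : continuous pieq).
Variable (psurj : forall y, exists x, pieq x = y).
Variable (cptX : compact [set: X]).
Variables (D : R) (hD : forall x y : X, mdist x y <= D).
Hypothesis hopen : forall U : set X, open U -> open (pieq @` U).
Variable nueq : probability (borel Y) R.
Hypothesis hsupp : forall U : set Y, open U -> U !=set0 -> (0 < nueq U)%E.

Lemma fiber_calX y : calX pieq (pieq @^-1` [set y]).
Proof.
split; first split.
- apply: preimage_closed => [x _|]; first exact: pcont.
  by apply: compact_closed; [exact: metric_hausdorff|exact: compact_set1].
- exact: fib0.
- move=> e e0; exists y; by rewrite (hdist_self hD (fib0 psurj y)).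
Qed.

Lemma part1 : calX_meas pieq nueq = [set pieq @^-1` [set y] | y in [set: Y]].
Proof.
apply/seteqP; split.
  move=> E [cE _]; have [[clE E0] hE] := cE; have [z Ez] := E0.
  exists (pieq z) => //; apply/seteqP; split; last first.
    by move=> w Ew; rewrite /=; exact: (calX_fiber pcont psurj hD cE Ez Ew).
  move=> w /= pw; apply: contrapT => nEw.
  have oC : open (~` E) by exact: closed_openC.
  have [r r0 hr] := nbhs_ball_ex (open_nbhs_at oC nEw).
  have r2 : 0 < r / 2 by rewrite divr_gt0.
  have oV : open (pieq @` [set w' | mdist w w' < r / 2]) by apply: hopen; exact: mball_open.
  have Vy : (pieq @` [set w' | mdist w w' < r / 2]) (pieq z).
    by exists w => //=; rewrite ?mdistxx.
  have [s s0 hs] := nbhs_ball_ex (open_nbhs_at oV Vy).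
  have [d d0 hd] := cont_eps pcont z s0.
  have eta0 : 0 < Num.min d (r / 2) by rewrite lt_min d0 r2.
  have [y'' hy''] := hE _ eta0.
  have [z'' pz'' zz''] := hdist_lt_exl hD (fib0 psurj y'') Ez hy''.
  rewrite lt_min in zz''; case/andP: zz'' => zz'' _.
  have := hs y''; rewrite -pz'' => /(_ (hd _ zz'')) [w' ww' pw'].
  have pw'' : (pieq @^-1` [set y'']) w' by rewrite /= pw'; exact: pz''.
  have [e Ee w'e] := hdist_lt_exr hD E0 pw'' hy''.
  rewrite lt_min in w'e; case/andP: w'e => _ w'e.
  apply: (hr e) => //.
  have t := metric_triangle w w' e; rewrite /= in ww'; lra.
move=> _ [y _ <-]; split; first exact: fiber_calX.
move=> eps e0.
have [s s0 hs] := fib_cont pcont psurj cptX hopen y e0.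
have sub : [set y' | mdist y y' < s] `<=` pi_calX_img pieq (calX_ball pieq (pieq @^-1` [set y]) eps).
  move=> y' yy'; exists (pieq @^-1` [set y']).
    by split; [exact: fiber_calX|exact: hs].
  by have [x px] := fib0 psurj y'; exists x.
pose V := [set y' : Y | mdist y y' < s].
have hV : (0 < nueq V)%E.
  by apply: hsupp; [exact: mball_open|exists y; rewrite /V /= mdistxx].
apply: (lt_le_trans hV).
apply: (@le_measure _ _ _ nueq V).
- rewrite inE; exact: open_meas (mball_open _ _).
- rewrite inE.
  have mA : measurable (pi_calX_img pieq (calX_ball pieq (pieq @^-1` [set y]) eps)
    : set (borel Y)) := A_meas pcont psurj cptX hD eps (fib0 psurj y).
  exact: mA.
- exact: sub.
Qed.

End Part1b.

End Aux.
Import Aux.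

Theorem lemma3p3 (R : realType)
  (G : countType) (mul : G -> G -> G) (one : G) (inv : G -> G)
  (HG : is_group mul one inv) (Ginf : ~ finite_set [set: G])
  (X : metricType R) (act : G -> X -> X)
  (Htds : tds mul one act) (Hmin : minimal act)
  (Xeq : pmetricType R) (acteq : G -> Xeq -> Xeq) (pieq : X -> Xeq)
  (Hmef : max_eq_factor mul one act acteq pieq)
  (nueq : probability (borel Xeq) R)
  (Hinv : invariant_measure acteq nueq)
  (Huniq : forall mu : probability (borel Xeq) R,
      invariant_measure acteq mu ->
      forall A : set (borel Xeq), measurable A -> mu A = nueq A) :
  [/\ (forall U : set X, open U -> open (pieq @` U)) ->
        calX_meas pieq nueq = [set pieq @^-1` [set y] | y in [set: Xeq]],
      regular_to_one pieq nueq 1 ->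
        forall E, calX_meas pieq nueq E -> E #= `I_1 &
      forall K : nat, regular_to_one pieq nueq K ->
        forall E, calX_meas pieq nueq E -> E #<= `I_K ].
Proof.
case: Htds => cptX _ _ _.
case: Hmef => HtdsY _ Hfac _.
have [pcont psurj _] := Hfac.
have [D hD] := compact_bounded_metric cptX.
have hsupp := full_support Hfac Hmin HtdsY Hinv.
split.
- by move=> hopen; exact: (@part1 _ _ _ pieq pcont psurj cptX D hD hopen nueq hsupp).
- exact: (@part2 _ _ _ pieq pcont psurj cptX D hD nueq).
- by move=> K; exact: (@part3 _ _ _ pieq pcont psurj cptX D hD nueq K).
Qed.
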